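(* Let $S=\{0,1,\dots,p-1\}$ with $p\ge 2$, let $m\ge 2$, and let $f:S^m\to S$ be a local rule. The global map $\tau$ is injective if and only if there exists no pair of periodic local configurations for $f$.
   Context: A local configuration is a finite word over $S$. For a word $w=w_1w_2\cdots w_n$ with $n\ge m$, its successor under $f$ is the word $\hat f(w)=u_1\cdots u_{n-m+1}$ with $u_j=f(w_j,w_{j+1},\dots,w_{j+m-1})$. For $k\le n$, $\mathrm{left}_k(w)=w_1\cdots w_k$ and $\mathrm{right}_k(w)=w_{n-k+1}\cdots w_n$. The global map is $\tau:S^{\mathbb Z}\to S^{\mathbb Z}$, $\tau(c)(i)=f(c(i-L),\dots,c(i+R))$ for fixed integers $L,R\ge 0$ with $L+1+R=m$; the CA is (globally) injective if $\tau$ is injective. Two local configurations $\alpha,\beta$ of the same length $n$ are periodic if: $n\ge m$; $\alpha\ne\beta$; $\mathrm{left}_{m-1}(\alpha)=\mathrm{right}_{m-1}(\alpha)$; $\mathrm{left}_{m-1}(\beta)=\mathrm{right}_{m-1}(\beta)$; and $\hat f(\alpha)=\hat f(\beta)$. *)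

(* Defs.v *)
From mathcomp Require Import all_boot all_order all_algebra.
Set Implicit Arguments. Unset Strict Implicit. Unset Printing Implicit Defensive.
Import GRing.Theory Num.Theory.

(* successor of a finite word w = w_1...w_n (n >= m):
   u_j = f(w_j, ..., w_{j+m-1}), j = 1..n-m+1 (0-indexed here). *)
Definition succ_word (T : Type) (m : nat) (f : m.-tuple T -> T) (w : seq T)
  : seq T :=
  match w with
  | [::] => [::]
  | x0 :: _ =>
      [seq f [tuple nth x0 w (j + k) | k < m] | j <- iota 0 (size w - m + 1)]
  end.

Definition left_k (T : Type) (k : nat) (w : seq T) := take k w.
Definition right_k (T : Type) (k : nat) (w : seq T) := drop (size w - k) w.

(* global map tau(c)(i) = f(c(i-L), ..., c(i+R)), with L+1+R = m *)
Definition global_map (T : Type) (m : nat) (f : m.-tuple T -> T) (L : nat)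
  (c : int -> T) : int -> T :=
  fun i => f [tuple c (i - L%:Z + k%:Z)%R | k < m].

Definition CA_injective (T : Type) (m : nat) (f : m.-tuple T -> T) (L : nat) :=
  forall c d : int -> T,
    (forall i, global_map f L c i = global_map f L d i) -> forall i, c i = d i.

Definition periodic_pair (T : eqType) (m : nat) (f : m.-tuple T -> T)
  (alpha beta : seq T) : Prop :=
  [/\ size alpha = size beta,
      m <= size alpha,
      alpha != beta,
      (left_k m.-1 alpha = right_k m.-1 alpha /\
       left_k m.-1 beta = right_k m.-1 beta)
    & succ_word f alpha = succ_word f beta].

(* Main.v *)
Require Import Defs.
From mathcomp Require Import all_boot all_order all_algebra zify.
Set Implicit Arguments. Unset Strict Implicit. Unset Printing Implicit Defensive.

Section Words.
Variables (T : finType) (m : nat) (f : m.-tuple T -> T) (x0 : T).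
Hypothesis m1 : 1 < m.

Definition win (w : seq T) j : m.-tuple T := [tuple nth x0 w (j + k) | k < m].

Lemma size_succ_word w : m <= size w -> size (succ_word f w) = size w - m + 1.
Proof. case: w => [|z w] /= hm; first lia. by rewrite /succ_word size_map size_iota. Qed.

Lemma nth_succ_word y w j : m <= size w -> j < size w - m + 1 ->
  nth y (succ_word f w) j = f (win w j).
Proof.
case: w => [|z w] /= hm hj; first lia. rewrite /succ_word (nth_map 0) ?size_iota // nth_iota //.
congr f; apply: eq_from_tnth => k; rewrite !tnth_mktuple.
apply: set_nth_default => /=. have := ltn_ord k. lia.
Qed.

Definition compat (A B : seq T) :=
  size A = size B /\ forall j, j + m <= size A -> f (win A j) = f (win B j).

Definition seg (A : seq T) a b := drop a (take (b + m.-1) A).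

Lemma size_seg A a b : a <= b -> b + m.-1 <= size A -> size (seg A a b) = b + m.-1 - a.
Proof. move=> ab bA; rewrite size_drop size_take; case: ifP; lia. Qed.

Lemma nth_seg A a b i : a + i < b + m.-1 -> nth x0 (seg A a b) i = nth x0 A (a + i).
Proof. move=> h; rewrite nth_drop nth_take //. Qed.

Lemma win_seg A a b j : j + m <= b + m.-1 - a -> win (seg A a b) j = win A (a + j).
Proof.
move=> h; apply: eq_from_tnth => k; rewrite !tnth_mktuple nth_seg -?addnA //.
have := ltn_ord k; lia.
Qed.

Lemma pp_of_words (X Y : seq T) :
  size X = size Y -> m <= size X -> X != Y ->
  take m.-1 X = drop (size X - m.-1) X ->
  take m.-1 Y = drop (size Y - m.-1) Y ->
  (forall j, j + m <= size X -> f (win X j) = f (win Y j)) ->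
  exists alpha beta, periodic_pair f alpha beta.
Proof.
move=> sXY mX XY lX lY cXY; exists X, Y; split => //.
apply: (@eq_from_nth _ x0); first by rewrite !size_succ_word -?sXY.
move=> j; rewrite size_succ_word // => hj.
rewrite !(nth_succ_word x0) -?sXY //; apply: cXY; lia.
Qed.

Definition st (A B : seq T) j : (m.-1).-tuple T * (m.-1).-tuple T :=
  ([tuple nth x0 A (j + k) | k < m.-1], [tuple nth x0 B (j + k) | k < m.-1]).

Lemma stP A B a b : st A B a = st A B b -> forall i, i < m.-1 ->
  nth x0 A (a + i) = nth x0 A (b + i) /\ nth x0 B (a + i) = nth x0 B (b + i).
Proof.
move=> e i hi; have e1 := congr1 fst e; have e2 := congr1 snd e; rewrite /= in e1 e2.
have := congr1 (fun t => tnth t (Ordinal hi)) e1.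
have := congr1 (fun t => tnth t (Ordinal hi)) e2.
by rewrite !tnth_mktuple.
Qed.

Lemma seg_lr A a b : a < b -> b + m.-1 <= size A ->
  (forall i, i < m.-1 -> nth x0 A (a + i) = nth x0 A (b + i)) ->
  take m.-1 (seg A a b) = drop (size (seg A a b) - m.-1) (seg A a b).
Proof.
move=> ab bA e; have sz := size_seg (ltnW ab) bA.
apply: (@eq_from_nth _ x0); first by rewrite size_take size_drop sz; case: ifP; lia.
move=> i; rewrite size_take sz; case: ifP => h1 h2; last lia.
rewrite nth_take // nth_drop !nth_seg; try lia.
rewrite e //; congr nth; lia.
Qed.

Lemma seg_pp A B a b : compat A B -> a < b -> b + m.-1 <= size A ->
  st A B a = st A B b -> seg A a b != seg B a b ->
  exists alpha beta, periodic_pair f alpha beta.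
Proof.
move=> [sAB cAB] ab bA est neq.
have bB : b + m.-1 <= size B by rewrite -sAB.
have szA := size_seg (ltnW ab) bA; have szB := size_seg (ltnW ab) bB.
apply: (pp_of_words (X:=seg A a b) (Y:=seg B a b)) => //; first by rewrite szA szB.
- rewrite szA; lia.
- by apply: seg_lr => // i hi; case: (stP est hi).
- by apply: seg_lr => // i hi; case: (stP est hi).
move=> j hj; rewrite szA in hj; rewrite !win_seg //; apply: cAB; lia.
Qed.


Definition ST := ((m.-1).-tuple T * (m.-1).-tuple T)%type.
Definition K := #|{: ST}|.

Lemma pigeon A B lo : compat A B -> lo + K + m.-1 <= size A ->
  (exists alpha beta, periodic_pair f alpha beta) \/
  exists a b, [/\ lo <= a, a < b, b <= lo + K &
     forall i, a <= i < b + m.-1 -> nth x0 A i = nth x0 B i].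
Proof.
move=> cAB hA.
pose g : 'I_K.+1 -> ST := fun i => st A B (lo + i).
have : ~~ injectiveb g.
  apply/negP => /injectiveP inj; have := @leq_card _ _ g inj; rewrite card_ord /K => h; suff : K < K by rewrite ltnn. exact: h.
case/injectivePn => i [j ij gij].
have [a [b [ab ha hb est]]] : exists a b, [/\ a < b, lo <= a, b <= lo + K & st A B a = st A B b].
  case: (ltngtP i j) => h.
  - exists (lo + i), (lo + j); split => //; try lia. have := ltn_ord j; lia.
  - exists (lo + j), (lo + i); split => //; try lia. have := ltn_ord i; lia.
  - by move: ij; rewrite (val_inj h) eqxx.
have bA : b + m.-1 <= size A by lia.
case: (eqVneq (seg A a b) (seg B a b)) => e.
  right; exists a, b; split => // k /andP [h1 h2].
  have := congr1 (nth x0 ^~ (k - a)) e; rewrite !nth_seg; try lia.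
  by rewrite subnKC.
left; exact: (seg_pp cAB ab bA est e).
Qed.

Lemma win_cat s1 s2 j : j + m <= size s1 -> win (s1 ++ s2) j = win s1 j.
Proof.
move=> h; apply: eq_from_tnth => k; rewrite !tnth_mktuple nth_cat.
have := ltn_ord k; case: ifP => //; lia.
Qed.

Lemma closing A B a' i0 a : compat A B -> a' <= i0 <= a -> a + m.-1 <= size A ->
  (forall k, k < m.-1 -> nth x0 A (a' + k) = nth x0 B (a' + k)) ->
  (forall k, k < m.-1 -> nth x0 A (a + k) = nth x0 B (a + k)) ->
  nth x0 A i0 != nth x0 B i0 ->
  exists alpha beta, periodic_pair f alpha beta.
Proof.
move=> [sAB cAB] /andP [h1 h2] hA d1 d2 neq.
have hB : a + m.-1 <= size B by rewrite -sAB.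
pose w := take m.-1 (drop a' A).
have sw : size w = m.-1 by rewrite size_take size_drop; case: ifP; lia.
have sA := size_seg (A:=A) (leq_trans h1 h2) hA.
have sB := size_seg (A:=B) (leq_trans h1 h2) hB.
have eqX : forall i, a - a' <= i -> nth x0 (seg A a' a ++ w) i = nth x0 (seg B a' a ++ w) i.
  move=> i hi; rewrite !nth_cat sA sB; case: ifP => // hl.
  rewrite !nth_seg; try lia.
  have -> : a' + i = a + (a' + i - a) by lia.
  apply: d2; lia.
have tk : forall C, a + m.-1 <= size C ->
    (forall k, k < m.-1 -> nth x0 C (a' + k) = nth x0 A (a' + k)) ->
    take m.-1 (seg C a' a) = w.
  move=> C hC dC; have sC := size_seg (A:=C) (leq_trans h1 h2) hC.
  apply: (@eq_from_nth _ x0); first by rewrite size_take sC sw; case: ifP; lia.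
  move=> i; rewrite size_take sC => hi.
  have him : i < m.-1 by move: hi; case: ifP; lia.
  have hi2 : i < a + m.-1 - a' by move: hi; case: ifP; lia.
  rewrite nth_take // nth_seg; try lia.
  rewrite dC // /w nth_take // nth_drop //.
apply: (pp_of_words (X := seg A a' a ++ w) (Y := seg B a' a ++ w)).
- by rewrite !size_cat sA sB.
- rewrite size_cat sA sw; lia.
- apply/eqP => e; have := congr1 (nth x0 ^~ (i0 - a')) e.
  have hlt : i0 - a' < a + m.-1 - a' by lia.
  rewrite !nth_cat sA sB hlt !nth_seg; try lia. rewrite subnKC // => e'.
  by move: neq; rewrite e' eqxx.
- rewrite size_cat sA sw addnK drop_size_cat // takel_cat; last lia.
  by rewrite tk.
- rewrite size_cat sB sw addnK drop_size_cat // takel_cat; last lia.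
  by rewrite tk // => k hk; rewrite d1.
move=> j; rewrite size_cat sA sw => hj.
case: (leqP (j + m) (a + m.-1 - a')) => hj2.
  rewrite !win_cat ?sA ?sB // !win_seg; try lia. apply: cAB; lia.
congr f; apply: eq_from_tnth => k; rewrite !tnth_mktuple; apply: eqX; lia.
Qed.

End Words.

Lemma per_nth (T : eqType) (x0 : T) (w : seq T) k :
  take k w = drop (size w - k) w -> k < size w ->
  forall i, i < size w -> nth x0 w i = nth x0 w (i %% (size w - k)).
Proof.
move=> e hk; set P := size w - k.
elim/ltn_ind => i IH hi.
case: (ltnP i P) => hiP; first by rewrite modn_small.
have h1 : i - P < k by rewrite /P; lia.
have := congr1 (nth x0 ^~ (i - P)) e; rewrite nth_take // nth_drop.
rewrite -/P subnKC // => <-.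
rewrite IH; try lia.
by rewrite -{2}(subnK hiP) modnDr.
Qed.

Section Main1.
Variables (p m : nat) (f : m.-tuple 'I_p -> 'I_p) (L : nat).
Hypothesis m1 : (1 < m)%N.
Local Open Scope ring_scope.

Lemma dir1 : CA_injective f L -> ~ (exists alpha beta : seq 'I_p, periodic_pair f alpha beta).
Proof.
move=> inj [al [be [sab mal neq [lal lbe] ssucc]]].
have [x0 _] : exists x0 : 'I_p, true.
  by case: al mal {sab neq lal ssucc} => [|z ?] /= h; [lia | exists z].
have [n en] : {n | size al = n} by exists (size al).
have mn : (m <= n)%N by rewrite -en; exact: mal.
have [P eP'] : {P | (n - m + 1)%N = P} by exists (n - m + 1)%N.
have eP : (n - m.-1)%N = P by lia.
have Ppos : (0 < P)%N by lia.
have hk : (m.-1 < n)%N by lia.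
have pal : forall i, (i < n)%N -> nth x0 al i = nth x0 al (i %% P).
  move=> i hi; rewrite -eP -en; apply: (per_nth x0 lal); rewrite en //.
have pbe : forall i, (i < n)%N -> nth x0 be i = nth x0 be (i %% P).
  move=> i hi; rewrite -eP -en sab; apply: (per_nth x0 lbe); rewrite -sab en //.
pose cf (w : seq 'I_p) (i : int) := nth x0 w (absz (i %% P%:Z)%Z).
have key : forall w, size w = n -> (forall i, (i < n)%N -> nth x0 w i = nth x0 w (i %% P)) ->
    forall t : int, forall k : nat, (k < m)%N ->
    cf w (t + k%:Z) = nth x0 w (absz (t %% P%:Z)%Z + k).
  move=> w sw pw t k hk'; rewrite /cf.
  set j := absz (t %% P%:Z)%Z.
  have ej : (t %% P%:Z)%Z = j%:Z.
    by rewrite /j gez0_abs // modz_ge0 // eqz_nat; lia.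
  have jP : (j < P)%N.
    have := ltz_pmod t (d := P%:Z); rewrite ej ltz_nat; apply; rewrite ltz_nat //.
  clearbody j; rewrite -modzDml ej -PoszD modz_nat /= [RHS]pw //; lia.
have gw : forall w, size w = n -> (forall i, (i < n)%N -> nth x0 w i = nth x0 w (i %% P)) ->
    forall i, global_map f L (cf w) i = nth x0 (succ_word f w) (absz ((i - L%:Z) %% P%:Z)%Z).
  move=> w sw pw i; rewrite (nth_succ_word f x0 m1); last first.
  - have : (absz ((i - L%:Z) %% P%:Z)%Z < P)%N.
      have h0 : P%:Z != 0 by rewrite eqz_nat; lia.
      have h1 : 0 < P%:Z by rewrite ltz_nat.
      have := modz_ge0 (i - L%:Z) h0; have := ltz_pmod (i - L%:Z) h1.
      move: ((i - L%:Z) %% P%:Z)%Z => r; lia.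
    rewrite sw; lia.
  - rewrite sw; lia.
  rewrite /global_map; congr f; apply: eq_from_tnth => k; rewrite !tnth_mktuple.
  exact: key.
have ecd : forall i, cf al i = cf be i.
  apply: inj => i; rewrite !gw -?sab // ssucc //.
move/eqP: neq; apply; apply: (@eq_from_nth _ x0) => // i hi.
have hin : (i < n)%N by rewrite -en.
by have := ecd i%:Z; rewrite /cf modz_nat /= -pal // -pbe.
Qed.
End Main1.

Section Main.
Variables (p m : nat) (f : m.-tuple 'I_p -> 'I_p) (L : nat).
Hypothesis m1 : 1 < m.
Local Open Scope ring_scope.

Lemma dir2 : ~ (exists alpha beta : seq 'I_p, periodic_pair f alpha beta) -> CA_injective f L.
Proof.
move=> npp c d H i0; case: (eqVneq (c i0) (d i0)) => // neq; exfalso; apply: npp.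
pose x0 := c i0.
pose KK := K 'I_p m.
pose base := i0 - KK%:Z.
pose N := (KK + KK + m)%N.
pose A := [seq c (base + i%:Z) | i <- iota 0 N].
pose B := [seq d (base + i%:Z) | i <- iota 0 N].
have sA : size A = N by rewrite size_map size_iota.
have sB : size B = N by rewrite size_map size_iota.
have nA : forall i, (i < N)%N -> nth x0 A i = c (base + i%:Z).
  by move=> i hi; rewrite (nth_map 0%N) ?size_iota // nth_iota.
have nB : forall i, (i < N)%N -> nth x0 B i = d (base + i%:Z).
  by move=> i hi; rewrite (nth_map 0%N) ?size_iota // nth_iota.
have eK : KK = K 'I_p m by [].
have eN : N = (KK + KK + m)%N by [].
have cAB : compat f x0 A B.
  split; first by rewrite sA sB.
  move=> j; rewrite sA => hj.
  have wA : win m x0 A j = [tuple c (base + j%:Z + L%:Z - L%:Z + k%:Z) | k < m].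
    apply: eq_from_tnth => k; rewrite !tnth_mktuple nA; last by have := ltn_ord k; lia.
    congr c; lia.
  have wB : win m x0 B j = [tuple d (base + j%:Z + L%:Z - L%:Z + k%:Z) | k < m].
    apply: eq_from_tnth => k; rewrite !tnth_mktuple nB; last by have := ltn_ord k; lia.
    congr d; lia.
  by rewrite wA wB; exact: H.
have hN : (KK + KK + m.-1 <= size A)%N by rewrite sA; lia.
have [//|[a [b [ha hab hb dab]]]] := pigeon m1 cAB hN.
have hN0 : (0 + KK + m.-1 <= size A)%N by rewrite sA; lia.
have [//|[a' [b' [ha' hab' hb' dab']]]] := pigeon m1 cAB hN0.
rewrite -eK in hb hb'.
apply: (closing (i0 := KK) (a' := a') (a := a) m1 cAB).
- apply/andP; split; lia.
- rewrite sA; lia.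
- move=> k hk; apply: dab'; lia.
- move=> k hk; apply: dab; lia.
rewrite nA ?nB; try lia.
by have -> : base + KK%:Z = i0 by rewrite /base; lia.
Qed.
End Main.

Theorem theorem2 (p m : nat) (f : m.-tuple 'I_p -> 'I_p) (L R : nat) :
  1 < p -> 1 < m -> L + 1 + R = m ->
  CA_injective f L <->
  ~ (exists alpha beta : seq 'I_p, periodic_pair f alpha beta).
Proof.
move=> _ m1 _; split; [exact: dir1 | exact: dir2].
Qed.
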